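(* Let $k$ be a field, let $n,m,n_1,\dots,n_r$ be positive integers with $n_1+\dots+n_r=n$, and let $G\subseteq\mathfrak{S}_r$ be a permutation group. There exists an $n\times n$ quantum parameter matrix $\mathfrak{q}$ with blocks $B_1,\dots,B_r$ of sizes $|B_i|=n_i$ and $\mathrm{Stab}(\mathfrak{q})=G$ (identifying $B_i$ with $i$), giving $\mathrm{Aut}_{\mathrm{gr}}(S_{\mathfrak{q}}(k^n))\cong\prod_i\mathrm{GL}(n_i,k)\rtimes G$, if and only if there exists an $mn\times mn$ quantum parameter matrix $\mathfrak{q}'$ with blocks $B'_1,\dots,B'_r$ of sizes $|B'_i|=m\,n_i$ and $\mathrm{Stab}(\mathfrak{q}')=G$ (identifying $B'_i$ with $i$), giving $\mathrm{Aut}_{\mathrm{gr}}(S_{\mathfrak{q}'}(k^{mn}))\cong\prod_i\mathrm{GL}(m\cdot n_i,k)\rtimes G$.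
   Context: A quantum parameter matrix is a square matrix $\mathfrak{p}=(p_{ij})$ over $k$ with $p_{ii}=1$ and $p_{ij}p_{ji}=1$. For such $\mathfrak{p}$ of size $N$, $S_{\mathfrak{p}}(k^N)$ is the $k$-algebra generated by the standard basis $v_1,\dots,v_N$ with relations $v_jv_i=p_{ij}v_iv_j$, graded by $\deg v_i=1$; $\mathrm{Aut}_{\mathrm{gr}}$ is its group of degree-preserving algebra automorphisms, viewed as a subgroup of $\mathrm{GL}(N,k)$. The blocks of $\mathfrak{p}$ are the classes of the partition of $[N]$ with $i\sim j$ iff rows $i,j$ of $\mathfrak{p}$ are identical; $\mathfrak{p}_{BC}=(p_{ij})_{i\in B,j\in C}$; with $r$ the number of blocks, $\mathfrak{S}_r$ permutes the blocks and $\mathrm{Stab}(\mathfrak{p})=\{\sigma\in\mathfrak{S}_r:|\sigma(B)|=|B|\text{ and }\mathfrak{p}_{BC}=\mathfrak{p}_{\sigma(B)\sigma(C)}\text{ for all blocks }B,C\}$. For any quantum parameter matrix $\mathfrak{p}$ one has $\mathrm{Aut}_{\mathrm{gr}}(S_{\mathfrak{p}}(k^N))\cong(\prod_{B}\mathrm{GL}(V_B))\rtimes\mathrm{Stab}(\mathfrak{p})$ with $\mathrm{GL}(V_B)\cong\mathrm{GL}(|B|,k)$ and $\mathrm{Stab}(\mathfrak{p})$ permuting the factors. *)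

(* Defs.v *)
From HB Require Import structures.
From mathcomp Require Import all_boot all_order all_algebra all_fingroup.
Set Implicit Arguments. Unset Strict Implicit. Unset Printing Implicit Defensive.
Import GRing.Theory.
Local Open Scope ring_scope.

Definition qparam (k : fieldType) (N : nat) (p : 'M[k]_N) : Prop :=
  (forall i, p i i = 1) /\ (forall i j, p i j * p j i = 1).

(* [lab] labels the blocks of [p] by 'I_r: two indices get the same label iff
   the corresponding rows of [p] are identical, and the block labelled [a]
   has exactly [sz a] elements.  (With all sz a > 0, this says the blocks of
   p are exactly B_1,...,B_r with |B_a| = sz a, B_a = lab^-1(a).) *)
Definition block_labeling (k : fieldType) (N r : nat) (p : 'M[k]_N)
    (lab : 'I_N -> 'I_r) (sz : 'I_r -> nat) : Prop :=
  (forall i j : 'I_N, lab i = lab j <-> row i p = row j p) /\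
  (forall a : 'I_r, #|[set i | lab i == a]| = sz a).

(* Stab(p), with block B_a identified with a via lab:
   sigma is in Stab(p) iff |B_(sigma a)| = |B_a| for all a, and
   p_{B C} = p_{sigma(B) sigma(C)} for all blocks B, C (entrywise: every entry
   of p in block B x C equals every entry in block sigma(B) x sigma(C)). *)
Definition in_stab (k : fieldType) (N r : nat) (p : 'M[k]_N)
    (lab : 'I_N -> 'I_r) (sigma : {perm 'I_r}) : Prop :=
  (forall a : 'I_r, #|[set i | lab i == sigma a]| = #|[set i | lab i == a]|) /\
  (forall i j i' j' : 'I_N,
      lab i' = sigma (lab i) -> lab j' = sigma (lab j) -> p i j = p i' j').

Definition realizable (k : fieldType) (N r : nat) (sz : 'I_r -> nat)
    (G : {set {perm 'I_r}}) : Prop :=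
  exists (p : 'M[k]_N) (lab : 'I_N -> 'I_r),
    qparam p /\ block_labeling p lab sz /\
    (forall sigma : {perm 'I_r}, in_stab p lab sigma <-> sigma \in G).

(* Main.v *)
Require Import Defs.
From HB Require Import structures.
From mathcomp Require Import all_boot all_order all_algebra all_fingroup.
Set Implicit Arguments. Unset Strict Implicit. Unset Printing Implicit Defensive.
Import GRing.Theory.
Local Open Scope ring_scope.
Lemma labeling_exists r (sz : 'I_r -> nat) N :
  (\sum_(a < r) sz a)%N = N ->
  exists lab : 'I_N -> 'I_r, forall a, #|[set i | lab i == a]| = sz a.
Proof.
move=> hs.
pose T := {a : 'I_r & 'I_(sz a)}.
have hN : #|{: T}| = N.
  rewrite card_tagged -hs.
  under eq_map => a do rewrite card_ord.
  by rewrite sumnE big_map big_enum.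
pose e (i : 'I_N) : T := enum_val (cast_ord (esym hN) i).
pose e' (x : T) : 'I_N := cast_ord hN (enum_rank x).
have e'K : cancel e' e by move=> x; rewrite /e /e' cast_ordK enum_rankK.
exists (fun i => tag (e i)) => a.
have -> : [set i | tag (e i) == a] = e' @: [set x : T | tag x == a].
  apply/setP => i; rewrite inE; apply/idP/imsetP.
    move=> h; exists (e i); first by rewrite inE.
    by rewrite /e /e' enum_valK cast_ordKV.
  by case=> x; rewrite inE => hx ->; rewrite e'K.
rewrite card_imset; last exact: can_inj e'K.
have -> : [set x : T | tag x == a] = (fun y : 'I_(sz a) => (Tagged (fun b => 'I_(sz b)) y : T)) @: setT.
  apply/setP => -[b y]; rewrite inE /=; apply/idP/imsetP.
    by move/eqP => eba; subst b; exists y.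
  by case=> z _ /(congr1 tag) /= ->.
rewrite card_imset ?cardsT ?card_ord //.
move=> y1 y2 h.
have := congr1 (tagged_as (Tagged (fun b => 'I_(sz b)) y1)) h.
by rewrite !tagged_asE.
Qed.

Definition Qcond (k : fieldType) r (sz : 'I_r -> nat) (G : {set {perm 'I_r}}) :=
  exists Q : 'M[k]_r, qparam Q /\ (forall a b, (forall c, Q a c = Q b c) -> a = b) /\
   forall s : {perm 'I_r}, ((forall a, sz (s a) = sz a) /\ (forall a b, Q a b = Q (s a) (s b))) <-> s \in G.

Lemma toQ (k : fieldType) N r (sz : 'I_r -> nat) G :
  (forall a, 0 < sz a)%N -> realizable k N sz G -> Qcond k sz G.
Proof.
move=> szp [p [lab [[pd pm] [[hl hc] hs]]]].
have ex a : exists i, lab i = a.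
  have := szp a; rewrite -hc card_gt0 => /set0Pn [i]; rewrite inE => /eqP <-.
  by exists i.
have [rep repP] := fin_all_exists ex.
have pnz i j : p i j != 0.
  by apply/eqP => h; have := pm i j; rewrite h mul0r => /eqP; rewrite eq_sym oner_eq0.
have prow i i' j : lab i = lab i' -> p i j = p i' j.
  move=> /hl /rowP /(_ j); by rewrite !mxE.
have pcol i j j' : lab j = lab j' -> p i j = p i j'.
  move=> e.
  have h1 : p i j = (p j i)^-1 by apply: (mulfI (pnz j i)); rewrite pm mulfV.
  have h2 : p i j' = (p j' i)^-1 by apply: (mulfI (pnz j' i)); rewrite pm mulfV.
  by rewrite h1 h2 (prow j j').
have pblk i j i' j' : lab i = lab i' -> lab j = lab j' -> p i j = p i' j'.
  by move=> e1 e2; rewrite (prow i i') // (pcol i' j j').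
pose Q := \matrix_(a, b) p (rep a) (rep b).
have QE i j : p i j = Q (lab i) (lab j) by rewrite mxE; apply: pblk; rewrite repP.
exists Q; split; [|split].
- by split => [a|a b]; rewrite !mxE ?pd ?pm.
- move=> a b h; rewrite -(repP a) -(repP b); apply/hl/rowP => j.
  by rewrite !mxE !QE !repP h.
- move=> s; apply: (iff_trans _ (hs s)); split.
  + case=> h1 h2; split; first by move=> a; rewrite !hc.
    move=> i j i' j' e1 e2; by rewrite !QE e1 e2 h2.
  + case=> h1 h2; split; first by move=> a; rewrite -!hc.
    move=> a b; rewrite !mxE; apply: h2; by rewrite !repP.
Qed.

Lemma fromQ (k : fieldType) N r (sz : 'I_r -> nat) G :
  (forall a, 0 < sz a)%N -> (\sum_(a < r) sz a)%N = N -> Qcond k sz G -> realizable k N sz G.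
Proof.
move=> szp hsum [Q [[Qd Qm] [Qinj hs]]].
have [lab hc] := labeling_exists hsum.
have ex a : exists i, lab i = a.
  have := szp a; rewrite -hc card_gt0 => /set0Pn [i]; rewrite inE => /eqP <-.
  by exists i.
have [rep repP] := fin_all_exists ex.
exists (\matrix_(i, j) Q (lab i) (lab j)), lab; split; [|split; [split|]].
- by split => [i|i j]; rewrite !mxE ?Qd ?Qm.
- move=> i j; split; first by move=> e; apply/rowP => c; rewrite !mxE e.
  move=> /rowP h; apply: Qinj => c; move: (h (rep c)); by rewrite !mxE !repP.
- exact: hc.
- move=> s; apply: (iff_trans _ (hs s)); split.
  + case=> h1 h2; split; first by move=> a; rewrite -!hc.
    move=> a b; have := h2 (rep a) (rep b) (rep (s a)) (rep (s b)).
    by rewrite !mxE !repP; apply.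
  + case=> h1 h2; split; first by move=> a; rewrite !hc.
    move=> i j i' j' e1 e2; by rewrite !mxE e1 e2 h2.
Qed.

Lemma Qcond_scale (k : fieldType) r m (ns : 'I_r -> nat) G :
  (0 < m)%N -> Qcond k ns G <-> Qcond k (fun a => m * ns a)%N G.
Proof.
move=> mp.
have E (s : {perm 'I_r}) : (forall a, ns (s a) = ns a) <-> (forall a, (m * ns (s a) = m * ns a)%N).
  split=> h a; first by rewrite h.
  by apply/eqP; rewrite -(eqn_pmul2l mp) h.
split=> -[Q [hq [hi hs]]]; exists Q; split=> //; split=> // s;
  apply: (iff_trans _ (hs s)); split=> -[h1 h2]; split=> //;
  first [exact: (proj1 (E s) h1) | exact: (proj2 (E s) h1)].
Qed.

Unset Implicit Arguments.
Local Close Scope ring_scope.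

Theorem corollary5p5 (k : fieldType) (n m r : nat) (ns : 'I_r -> nat)
    (G : {group {perm 'I_r}}) :
  (0 < n)%N -> (0 < m)%N -> (0 < r)%N -> (forall a, 0 < ns a)%N ->
  (\sum_(a < r) ns a)%N = n ->
  realizable k n ns G <-> realizable k (m * n) (fun a => m * ns a)%N G.
Proof.
move=> np mp rp nsp hsum.
have nsp' : forall a, (0 < m * ns a)%N by move=> a; rewrite muln_gt0 mp nsp.
have hsum' : (\sum_(a < r) m * ns a)%N = (m * n)%N by rewrite -big_distrr /= hsum.
split=> h.
- apply: (fromQ nsp' hsum'); exact: (proj1 (Qcond_scale k ns G mp) (toQ nsp h)).
- apply: (fromQ nsp hsum); exact: (proj2 (Qcond_scale k ns G mp) (toQ nsp' h)).
Qed.
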